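(* For $q\in(0,1)$, let $(X_q,d_q)$ be the compact metric space with $X_q=\{0\}\cup\{q^{2k}:k\in\mathbb N_0\}$ and $d_q$ as defined in the context. Then the map $q\mapsto (X_q,d_q)$ from $(0,1)$ to compact metric spaces is continuous with respect to the Gromov–Hausdorff distance, and $(X_q,d_q)$ converges in Gromov–Hausdorff distance to the interval $[-\pi/2,\pi/2]$ with its standard Euclidean metric as $q\to 1^-$.
   Context: For $q\in(0,1)$ define $\rho_q:[-1,\infty)\to\mathbb R$ by $\rho_q(x)=\dfrac{\sqrt{1-q^{2(x+1)}}}{(1-q^2)q^x}$, and define $d_q:X_q\times X_q\to[0,\infty)$ by $d_q(x,x)=0$; $d_q(q^{2n},q^{2m})=\sum_{k=\min\{m,n\}}^{\max\{m,n\}-1}1/\rho_q(k)$ for $n\ne m$; and $d_q(q^{2n},0)=d_q(0,q^{2n})=\sum_{k=n}^\infty 1/\rho_q(k)$. The Gromov–Hausdorff distance between compact metric spaces $X,Y$ is the infimum of Hausdorff distances between isometric images of $X$ and $Y$ in a common metric space $Z$, over all such $Z$ and isometric embeddings. *)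

(* Defs.v *)
From Stdlib Require Import Reals List.
From Coquelicot Require Import Coquelicot.
Import ListNotations.
Open Scope R_scope.

Definition rho (q x : R) : R :=
  sqrt (1 - Rpower q (2 * (x + 1))) / ((1 - q ^ 2) * Rpower q x).

(* Points of X_q: [Some n] stands for q^(2n), [None] stands for 0.
   For q in (0,1) this is a bijection onto X_q = {0} ∪ {q^(2k) : k ∈ N0}. *)
Definition Xpt := option nat.

Definition fsum (f : nat -> R) (m M : nat) : R :=
  fold_right Rplus 0 (map f (seq m (M - m))).

Definition inv_rho (q : R) (k : nat) : R := 1 / rho q (INR k).

Definition dq (q : R) (x y : Xpt) : R :=
  match x, y with
  | None, None => 0
  | Some n, Some m =>
      if Nat.eqb n m then 0
      else fsum (inv_rho q) (Nat.min m n) (Nat.max m n)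
  | Some n, None | None, Some n => Series (fun k => inv_rho q (n + k))
  end.

Definition Ipt := { x : R | - (PI / 2) <= x <= PI / 2 }.
Definition dI (x y : Ipt) : R := Rabs (proj1_sig x - proj1_sig y).

Definition is_metric {Z : Type} (d : Z -> Z -> R) : Prop :=
  (forall x y, d x y = 0 <-> x = y) /\
  (forall x y, d x y = d y x) /\
  (forall x y z, d x z <= d x y + d y z).

Definition isometric_embedding {X Z : Type} (dX : X -> X -> R)
    (dZ : Z -> Z -> R) (f : X -> Z) : Prop :=
  forall x y, dZ (f x) (f y) = dX x y.

(* Hausdorff distance between f(X) and g(Y) in (Z,dZ) is < eps, unfolded:
   d_H = max(sup_x inf_y, sup_y inf_x) < eps  iff  there is r < eps with
   every point of each image within distance < r of the other image. *)
Definition hausdorff_lt {X Y Z : Type} (dZ : Z -> Z -> R)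
    (f : X -> Z) (g : Y -> Z) (eps : R) : Prop :=
  exists r, r < eps /\
    (forall x, exists y, dZ (f x) (g y) < r) /\
    (forall y, exists x, dZ (f x) (g y) < r).

(* Gromov–Hausdorff distance (infimum over all Z and isometric embeddings of
   Hausdorff distances) is < eps, unfolded. *)
Definition GH_lt {X Y : Type} (dX : X -> X -> R) (dY : Y -> Y -> R)
    (eps : R) : Prop :=
  exists (Z : Type) (dZ : Z -> Z -> R) (f : X -> Z) (g : Y -> Z),
    is_metric dZ /\ isometric_embedding dX dZ f /\
    isometric_embedding dY dZ g /\ hausdorff_lt dZ f g eps.

(* Main.v *)
Require Import Defs.
From Stdlib Require Import Reals Lra Lia List.
From Coquelicot Require Import Coquelicot.
Open Scope R_scope.

Definition a (q : R) (k : nat) : R := (1 - q^2) * q^k / sqrt (1 - q^(2*k+2)).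

Lemma pow_in q n : 0 < q < 1 -> 0 < q^n <= 1.
Proof.
  intros Hq. induction n; simpl. lra. split. apply Rmult_lt_0_compat; lra. nra.
Qed.

Lemma powS_lt q n : 0 < q < 1 -> q^(S n) <= q.
Proof. intros Hq. simpl. pose proof (pow_in q n Hq). nra. Qed.

Lemma pow_ge_sq q k : 0 < q < 1 -> q^(2*k+2) <= q^2.
Proof.
  intros Hq. replace (2*k+2)%nat with (2 + 2*k)%nat by lia. rewrite pow_add.
  pose proof (pow_in q (2*k) Hq). pose proof (pow_in q 2 Hq). nra.
Qed.

Lemma den_pos q k : 0 < q < 1 -> 0 < sqrt (1 - q^(2*k+2)).
Proof.
  intros Hq. apply sqrt_lt_R0. pose proof (pow_ge_sq q k Hq). simpl in *. nra.
Qed.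

Lemma inv_rho_eq q k : 0 < q < 1 -> inv_rho q k = a q k.
Proof.
  intros Hq. unfold inv_rho, rho, a.
  replace (2 * (INR k + 1)) with (INR (2*k+2)) by (rewrite plus_INR, mult_INR; simpl; lra).
  rewrite !Rpower_pow by lra.
  pose proof (den_pos q k Hq). pose proof (pow_in q k Hq).
  assert (0 < 1 - q^2) by (simpl; nra).
  field. split; lra.
Qed.

Lemma a_pos q k : 0 < q < 1 -> 0 < a q k.
Proof.
  intros Hq. unfold a. pose proof (den_pos q k Hq). pose proof (pow_in q k Hq).
  assert (0 < 1 - q^2) by (simpl; nra).
  apply Rdiv_lt_0_compat; [nra|lra].
Qed.

Lemma a_le q k : 0 < q < 1 -> a q k <= sqrt (1 - q^2) * q^k.
Proof.
  intros Hq. unfold a. pose proof (den_pos q k Hq). pose proof (pow_in q k Hq).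
  assert (0 < 1 - q^2) by (simpl; nra).
  assert (sqrt (1 - q^2) <= sqrt (1 - q^(2*k+2))).
  { apply sqrt_le_1_alt. pose proof (pow_ge_sq q k Hq). lra. }
  assert (Hs: sqrt (1-q^2) * sqrt (1-q^2) = 1 - q^2) by (apply sqrt_sqrt; lra).
  assert (0 < sqrt (1-q^2)) by (apply sqrt_lt_R0; lra).
  apply Rle_div_l. lra.
  rewrite <- Hs at 1. assert (0 <= sqrt (1-q^2) * q^k) by nra.
  replace (sqrt (1 - q ^ 2) * sqrt (1 - q ^ 2) * q ^ k) with ((sqrt (1-q^2) * q^k) * sqrt (1-q^2)) by ring.
  apply Rmult_le_compat_l; lra.
Qed.

Lemma sq_le1 q : 0 < q < 1 -> sqrt (1 - q^2) <= 1.
Proof. intros. rewrite <- sqrt_1 at 2. apply sqrt_le_1_alt. assert (0 < q^2) by (apply pow_lt; lra). lra. Qed.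

Lemma a_le' q k : 0 < q < 1 -> a q k <= q^k.
Proof.
  intros Hq. eapply Rle_trans. apply a_le; auto. pose proof (sq_le1 q Hq).
  pose proof (pow_in q k Hq). pose proof (sqrt_pos (1-q^2)). nra.
Qed.

Lemma ex_a q n : 0 < q < 1 -> ex_series (fun k => a q (n+k)).
Proof.
  intros Hq. apply (@ex_series_le R_AbsRing R_CompleteNormedModule _ (fun k => q^n * q^k)).
  - intros k. rewrite <- pow_add. rewrite Rabs_pos_eq. apply a_le'; auto.
    left; apply a_pos; auto.
  - apply (ex_series_scal_l (q^n) (fun k => q^k)). apply ex_series_geom. rewrite Rabs_pos_eq; lra.
Qed.

Definition F q n := Series (fun k => a q (n+k)).

Lemma F_S q n : 0 < q < 1 -> F q n = a q n + F q (S n).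
Proof.
  intros Hq. unfold F. rewrite Series_incr_1 by (apply ex_a; auto).
  rewrite Nat.add_0_r. f_equal. apply Series_ext. intros k. f_equal. lia.
Qed.

Lemma F_bound q n : 0 < q < 1 -> 0 <= F q n <= q^n / (1-q).
Proof.
  intros Hq. unfold F. split.
  - assert (H0 : Series (fun _ : nat => 0) = 0).
    { rewrite (Series_ext _ (fun k => 0 * 0^k)) by (intro; ring). rewrite Series_scal_l; ring. }
    rewrite <- H0. apply Series_le. intros k. split. lra. left; apply a_pos; auto. apply ex_a; auto.
  - replace (q^n/(1-q)) with (Series (fun k => q^n * q^k)).
    apply Series_le. intros k. rewrite <- pow_add. split. left; apply a_pos; auto. apply a_le'; auto.
    apply (ex_series_scal_l (q^n) (fun k => q^k)). apply ex_series_geom. rewrite Rabs_pos_eq; lra.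
    rewrite Series_scal_l, Series_geom. unfold Rdiv; auto. rewrite Rabs_pos_eq; lra.
Qed.
Lemma asin_mvt x y : 0 <= x < y -> y < 1 ->
  (y - x) / sqrt (1 - x^2) <= asin y - asin x <= (y - x) / sqrt (1 - y^2).
Proof.
  intros Hx Hy.
  destruct (MVT_cor2 asin (fun c => 1 / sqrt (1 - c^2)) x y) as [c [Hc1 Hc2]].
  - lra.
  - intros c Hc. assert (Hr : -1 < c < 1) by lra.
    apply (derive_pt_eq_1 _ _ _ (derivable_pt_asin c Hr)).
    rewrite derive_pt_asin. rewrite Rsqr_pow2. reflexivity.
  - rewrite Hc1.
    assert (0 < 1 - y^2) by nra. assert (0 < 1 - c^2) by nra. assert (0 < 1 - x^2) by nra.
    assert (sqrt (1 - y^2) <= sqrt (1 - c^2)) by (apply sqrt_le_1_alt; nra).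
    assert (sqrt (1 - c^2) <= sqrt (1 - x^2)) by (apply sqrt_le_1_alt; nra).
    assert (0 < sqrt (1 - y^2)) by (apply sqrt_lt_R0; lra).
    split; unfold Rdiv; rewrite (Rmult_comm (y-x)); apply Rmult_le_compat_r; try lra;
    rewrite Rmult_1_l; apply Rinv_le_contravar; lra.
Qed.

Definition Sm (f : nat -> R) (n len : nat) : R := fold_right Rplus 0 (map f (seq n len)).

Lemma fsum_Sm f n M : fsum f n M = Sm f n (M - n).
Proof. reflexivity. Qed.

Lemma Sm_succ f n len : Sm f n (S len) = f n + Sm f (S n) len.
Proof. reflexivity. Qed.

Lemma Sm_ext f g n len : (forall k, (n <= k)%nat -> f k = g k) -> Sm f n len = Sm g n len.
Proof.
  revert n. induction len; intros n H. reflexivity.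
  rewrite !Sm_succ. rewrite H by lia. rewrite IHlen. reflexivity. intros; apply H; lia.
Qed.

Lemma Sm_le f g n len : (forall k, (n <= k)%nat -> f k <= g k) -> Sm f n len <= Sm g n len.
Proof.
  revert n. induction len; intros n H. unfold Sm; simpl; lra.
  rewrite !Sm_succ. pose proof (H n (le_n n)). pose proof (IHlen (S n) ltac:(intros; apply H; lia)). lra.
Qed.

Lemma Sm_nonneg f n len : (forall k, 0 <= f k) -> 0 <= Sm f n len.
Proof.
  intros H. revert n. induction len; intros n. unfold Sm; simpl; lra.
  rewrite Sm_succ. pose proof (H n). pose proof (IHlen (S n)). lra.
Qed.

Lemma Sm_minus f g n len : Sm (fun k => f k - g k) n len = Sm f n len - Sm g n len.
Proof.
  revert n. induction len; intros n. unfold Sm; simpl; lra.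
  rewrite !Sm_succ, IHlen. ring.
Qed.

Lemma Sm_abs f n len c : (forall k, (n <= k < n + len)%nat -> Rabs (f k) <= c) ->
  Rabs (Sm f n len) <= INR len * c.
Proof.
  revert n. induction len; intros n H. unfold Sm; simpl. rewrite Rabs_R0; lra.
  rewrite Sm_succ, S_INR. eapply Rle_trans. apply Rabs_triang.
  pose proof (H n ltac:(lia)). pose proof (IHlen (S n) ltac:(intros; apply H; lia)). lra.
Qed.

Lemma Sm_tele g n len : Sm (fun k => g k - g (S k)) n len = g n - g (n + len)%nat.
Proof.
  revert n. induction len; intros n. unfold Sm; simpl. rewrite Nat.add_0_r; ring.
  rewrite Sm_succ, IHlen. replace (S n + len)%nat with (n + S len)%nat by lia. ring.
Qed.

Lemma F_split q n m : 0 < q < 1 -> F q n = Sm (a q) n m + F q (n + m).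
Proof.
  intros Hq. revert n. induction m; intros n.
  - unfold Sm; simpl. rewrite Nat.add_0_r. ring.
  - rewrite Sm_succ, F_S by auto. rewrite IHm. replace (S n + m)%nat with (n + S m)%nat by lia. ring.
Qed.

Lemma F_decr q n m : 0 < q < 1 -> (n <= m)%nat -> F q m <= F q n.
Proof.
  intros Hq H. rewrite (F_split q n (m - n)) by auto. replace (n + (m-n))%nat with m by lia.
  pose proof (Sm_nonneg (a q) n (m-n) ltac:(intros; left; apply a_pos; auto)). lra.
Qed.

Definition emb (q : R) (x : Xpt) : R := match x with Some n => F q n | None => 0 end.
Definition dR (x y : R) : R := Rabs (x - y).

Lemma dR_metric : is_metric dR.
Proof.
  unfold dR. split; [|split].
  - intros x y. split; intros H. destruct (Rcase_abs (x-y)); [rewrite Rabs_left in H|rewrite Rabs_right in H]; lra.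
    subst. unfold Rminus. rewrite Rplus_opp_r, Rabs_R0. auto.
  - intros. apply Rabs_minus_sym.
  - intros x y z. replace (x - z) with ((x-y) + (y-z)) by ring. apply Rabs_triang.
Qed.

Lemma emb_iso q : 0 < q < 1 -> isometric_embedding (dq q) dR (emb q).
Proof.
  intros Hq [n|] [m|]; unfold dR, emb, dq.
  - destruct (Nat.eqb_spec n m).
    + subst. unfold Rminus. rewrite Rplus_opp_r, Rabs_R0. auto.
    + rewrite fsum_Sm. rewrite (Sm_ext _ (a q)) by (intros; apply inv_rho_eq; auto).
      destruct (Nat.lt_ge_cases n m).
      * rewrite Nat.min_r, Nat.max_l by lia.
        rewrite (F_split q n (m - n)) by auto. replace (n + (m-n))%nat with m by lia.
        pose proof (Sm_nonneg (a q) n (m-n) ltac:(intros; left; apply a_pos; auto)).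
        rewrite Rabs_pos_eq; lra.
      * rewrite Nat.min_l, Nat.max_r by lia.
        rewrite (F_split q m (n - m)) by auto. replace (m + (n-m))%nat with n by lia.
        pose proof (Sm_nonneg (a q) m (n-m) ltac:(intros; left; apply a_pos; auto)).
        rewrite Rabs_left1; lra.
  - rewrite Rminus_0_r. rewrite Rabs_pos_eq by (apply F_bound; auto).
    unfold F. apply Series_ext. intros; symmetry; apply inv_rho_eq; auto.
  - rewrite Rminus_0_l, Rabs_Ropp. rewrite Rabs_pos_eq by (apply F_bound; auto).
    unfold F. apply Series_ext. intros; symmetry; apply inv_rho_eq; auto.
  - unfold Rminus. rewrite Rplus_opp_r, Rabs_R0. auto.
Qed.

Lemma GH_R {X Y : Type} (dX : X -> X -> R) (dY : Y -> Y -> R) f g eps r :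
  isometric_embedding dX dR f -> isometric_embedding dY dR g -> r < eps ->
  (forall x, exists y, dR (f x) (g y) < r) -> (forall y, exists x, dR (f x) (g y) < r) ->
  GH_lt dX dY eps.
Proof.
  intros. exists R, dR, f, g. split. apply dR_metric. split; auto. split; auto.
  exists r. auto.
Qed.

Lemma cont_a k q0 : 0 < 1 - q0^(2*k+2) -> forall eps : posreal, exists delta : posreal, forall q, Rabs (q - q0) < delta -> Rabs (a q k - a q0 k) < eps.
Proof.
  intros H eps.
  assert (Hc : continuous (fun q => a q k) q0).
  { apply (@ex_derive_continuous R_AbsRing R_NormedModule). unfold a. auto_derive. replace (k + (k + 0) + 2)%nat with (2*k+2)%nat by (simpl; auto). 
    split. lra. split; auto. apply Rgt_not_eq. apply sqrt_lt_R0. lra. }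
  destruct (proj1 (filterlim_locally _ _) Hc eps) as [d Hd].
  exists d. intros q Hq. apply (Hd q). exact Hq.
Qed.

Lemma cont_fin q0 : 0 < q0 < 1 -> forall N (c : posreal), exists d : posreal, forall q, Rabs (q - q0) < d ->
  forall k, (k < N)%nat -> Rabs (a q k - a q0 k) < c.
Proof.
  intros Hq0. induction N; intros c.
  - exists (mkposreal 1 Rlt_0_1). intros. lia.
  - destruct (IHN c) as [d1 Hd1].
    assert (H1 : 0 < 1 - q0^(2*N+2)) by (pose proof (pow_ge_sq q0 N Hq0); simpl in *; nra).
    destruct (cont_a N q0 H1 c) as [d2 Hd2].
    assert (Hp : 0 < Rmin d1 d2) by (apply Rmin_pos; apply cond_pos).
    exists (mkposreal _ Hp). simpl. intros q Hq k Hk.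
    destruct (Nat.eq_dec k N).
    + subst. apply Hd2. pose proof (Rmin_r d1 d2). lra.
    + apply Hd1. pose proof (Rmin_l d1 d2). lra. lia.
Qed.

Lemma part1 q0 : 0 < q0 < 1 -> forall eps, 0 < eps -> exists delta, 0 < delta /\
  forall q, 0 < q < 1 -> Rabs (q - q0) < delta -> GH_lt (dq q) (dq q0) eps.
Proof.
  intros Hq0 eps Heps.
  set (q1 := (1 + q0) / 2).
  assert (Hq1 : 0 < q1 < 1) by (unfold q1; lra).
  assert (Hy : 0 < eps * (1 - q1) / 8) by (apply Rdiv_lt_0_compat; [apply Rmult_lt_0_compat|]; lra).
  destruct (pow_lt_1_zero q1 ltac:(rewrite Rabs_pos_eq; lra) _ Hy) as [N HN].
  assert (Htail : forall q M, 0 < q <= q1 -> (N <= M)%nat -> F q M < eps / 8).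
  { intros q M Hq HM. assert (Hq' : 0 < q < 1) by lra.
    pose proof (F_bound q M Hq'). pose proof (HN M HM). rewrite Rabs_pos_eq in H0 by (left; apply pow_lt; lra).
    assert (q^M <= q1^M) by (apply pow_incr; lra).
    assert (q^M / (1-q) <= q1^M/(1-q1)).
    { unfold Rdiv. apply Rmult_le_compat. left; apply pow_lt; lra. left; apply Rinv_0_lt_compat; lra. lra.
      apply Rinv_le_contravar; lra. }
    assert (q1^M / (1-q1) < eps/8).
    { apply Rlt_div_l. lra. replace (eps/8*(1-q1)) with (eps*(1-q1)/8) by field. lra. }
    lra. }
  assert (Hc : 0 < eps / (8 * (INR N + 1))).
  { apply Rdiv_lt_0_compat. lra. pose proof (pos_INR N). lra. }
  destruct (cont_fin q0 Hq0 N (mkposreal _ Hc)) as [d Hd]. simpl in Hd.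
  exists (Rmin d ((1 - q0)/2)). split. apply Rmin_pos. apply cond_pos. lra.
  intros q Hq Hqq.
  pose proof (Rmin_l d ((1-q0)/2)). pose proof (Rmin_r d ((1-q0)/2)).
  assert (Hqq1 : q <= q1). { unfold q1. apply Rabs_def2 in Hqq. lra. }
  assert (Hbound : forall n, Rabs (F q n - F q0 n) < eps / 2).
  { intros n. set (M := Nat.max n N).
    rewrite (F_split q n (M - n)) by auto. rewrite (F_split q0 n (M - n)) by auto.
    replace (n + (M - n))%nat with M by lia.
    assert (HS : Rabs (Sm (fun k => a q k - a q0 k) n (M - n)) <= INR (M - n) * (eps / (8 * (INR N + 1)))).
    { apply Sm_abs. intros k Hk. left. apply Hd. lra. lia. }
    rewrite Sm_minus in HS.
    assert (INR (M - n) <= INR N) by (apply le_INR; lia).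
    assert (INR N * (eps / (8 * (INR N + 1))) < eps / 8).
    { pose proof (pos_INR N).
      replace (INR N * (eps / (8 * (INR N + 1)))) with (eps/8 - eps / (8 * (INR N + 1))) by (field; lra).
      lra. }
    assert (INR (M - n) * (eps / (8 * (INR N + 1))) <= INR N * (eps / (8 * (INR N + 1)))).
    { apply Rmult_le_compat_r. lra. auto. }
    pose proof (Htail q M ltac:(lra) ltac:(lia)). pose proof (Htail q0 M ltac:(unfold q1; lra) ltac:(lia)).
    pose proof (F_bound q M Hq). pose proof (F_bound q0 M Hq0).
    eapply Rle_lt_trans.
    replace (Sm (a q) n (M - n) + F q M - (Sm (a q0) n (M - n) + F q0 M))
      with ((Sm (a q) n (M - n) - Sm (a q0) n (M - n)) + (F q M - F q0 M)) by ring.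
    apply Rabs_triang.
    assert (Rabs (F q M - F q0 M) < eps / 4) by (apply Rabs_def1; lra).
    lra. }
  apply (GH_R _ _ (emb q) (emb q0) eps (eps/2)); try apply emb_iso; auto; try lra.
  - intros [n|]. exists (Some n). apply Hbound. exists None. unfold dR, emb. rewrite Rminus_0_r, Rabs_R0. lra.
  - intros [n|]. exists (Some n). apply Hbound. exists None. unfold dR, emb. rewrite Rminus_0_r, Rabs_R0. lra.
Qed.

Lemma pow_sq q k : (q^(S k))^2 = q^(2*k+2).
Proof. rewrite <- pow_mult. f_equal. lia. Qed.

Lemma asin_nonneg x : 0 <= x < 1 -> 0 <= asin x.
Proof.
  intros Hx. destruct (Req_dec x 0). subst; rewrite asin_0; lra.
  pose proof (asin_mvt 0 x ltac:(lra) ltac:(lra)). rewrite asin_0 in H0.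
  assert (0 < sqrt (1 - 0^2)) by (apply sqrt_lt_R0; simpl; lra).
  assert (0 < (x - 0) / sqrt (1 - 0^2)) by (apply Rdiv_lt_0_compat; lra). lra.
Qed.

Lemma a_up q k : 0 < q < 1 -> (1 <= k)%nat -> a q k <= (1+q) * asin (q^k) - (1+q) * asin (q^(S k)).
Proof.
  intros Hq Hk. destruct k. lia.
  pose proof (powS_lt q k Hq). pose proof (pow_in q (S k) Hq).
  assert (Hlt : q^(S (S k)) < q^(S k)) by (change (q^(S (S k))) with (q * q^(S k)); nra).
  assert (Hz : 0 <= q^(S (S k))) by (left; apply pow_lt; lra).
  pose proof (asin_mvt (q^(S (S k))) (q^(S k)) ltac:(lra) ltac:(lra)) as [Hm _].
  unfold a. rewrite <- pow_sq.
  assert (0 < 1 - (q^(S (S k)))^2) by nra.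
  assert (0 < sqrt (1 - (q^(S (S k)))^2)) by (apply sqrt_lt_R0; lra).
  replace ((1 - q^2) * q^(S k)) with ((1+q) * (q^(S k) - q^(S (S k)))) by (simpl; ring).
  unfold Rdiv in *. rewrite Rmult_assoc. rewrite <- Rmult_minus_distr_l.
  apply Rmult_le_compat_l; lra.
Qed.

Lemma a_lo q k : 0 < q < 1 -> (1+q) * asin (q^(S k)) - (1+q) * asin (q^(S (S k))) <= a q k.
Proof.
  intros Hq.
  pose proof (powS_lt q k Hq). pose proof (pow_in q (S k) Hq). pose proof (pow_in q k Hq).
  assert (Hlt : q^(S (S k)) < q^(S k)) by (change (q^(S (S k))) with (q * q^(S k)); nra).
  assert (Hz : 0 <= q^(S (S k))) by (left; apply pow_lt; lra).
  pose proof (asin_mvt (q^(S (S k))) (q^(S k)) ltac:(lra) ltac:(lra)) as [_ Hm].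
  unfold a. rewrite <- pow_sq.
  assert (0 < 1 - (q^(S k))^2) by nra.
  assert (0 < sqrt (1 - (q^(S k))^2)) by (apply sqrt_lt_R0; lra).
  rewrite <- Rmult_minus_distr_l.
  apply Rle_trans with ((1+q) * ((q ^ S k - q ^ S (S k)) / sqrt (1 - (q ^ S k) ^ 2))).
  apply Rmult_le_compat_l; lra.
  unfold Rdiv. rewrite <- Rmult_assoc. apply Rmult_le_compat_r.
  left; apply Rinv_0_lt_compat; lra.
  change (q^(S (S k))) with (q * q^(S k)). change (q^(S k)) with (q * q^k). replace ((1 + q) * (q * q ^ k - q * (q * q ^ k))) with (q * ((1 - q^2) * q^k)) by ring. assert (0 <= (1-q^2)*q^k) by (apply Rmult_le_pos; [simpl; nra|lra]). nra.
Qed.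

Lemma L_upper q eta : 0 < q < 1 -> 0 < eta -> F q 0 <= sqrt (1 - q^2) + (1+q) * asin q + eta.
Proof.
  intros Hq Heta.
  assert (Hy : 0 < eta * (1 - q)) by (apply Rmult_lt_0_compat; lra).
  destruct (pow_lt_1_zero q ltac:(rewrite Rabs_pos_eq; lra) _ Hy) as [N HN].
  rewrite F_S by auto. rewrite (F_split q 1 N) by auto.
  pose proof (a_le q 0 Hq) as Ha0. simpl pow in Ha0 at 2. rewrite Rmult_1_r in Ha0.
  assert (Hs : Sm (a q) 1 N <= Sm (fun k => (1+q) * asin (q^k) - (1+q) * asin (q^(S k))) 1 N).
  { apply Sm_le. intros; apply a_up; auto. }
  rewrite (Sm_tele (fun k => (1+q) * asin (q^k))) in Hs.
  pose proof (pow_in q N Hq) as HpN.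
  assert (Hp1 : q^(1+N) <= q^N) by (simpl; nra).
  assert (Hp2 : 0 < q^(1+N) < 1) by (simpl; split; nra).
  pose proof (asin_nonneg (q^(1+N)) ltac:(lra)) as Has.
  pose proof (F_bound q (1+N) Hq) as HF.
  pose proof (HN N (le_n N)) as HNN. rewrite Rabs_pos_eq in HNN by lra.
  assert (Hd : q^(1+N) / (1-q) <= eta).
  { apply Rle_div_l. lra. lra. }
  simpl pow in Hs at 1. rewrite Rmult_1_r in Hs.
  assert (0 <= (1+q) * asin (q ^ (1 + N))) by (apply Rmult_le_pos; lra).
  lra.
Qed.

Lemma asin_small x : 0 <= x <= 1/2 -> asin x <= 2 * x.
Proof.
  intros Hx. destruct (Req_dec x 0). subst; rewrite asin_0; lra.
  pose proof (asin_mvt 0 x ltac:(lra) ltac:(lra)) as [_ Hm]. rewrite asin_0 in Hm.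
  assert (1/2 <= sqrt (1 - x^2)).
  { rewrite <- (sqrt_pow2 (1/2)) by lra. apply sqrt_le_1_alt. nra. }
  assert ((x - 0) / sqrt (1 - x^2) <= 2 * x).
  { apply Rle_div_l. lra. nra. }
  lra.
Qed.

Lemma L_lower q m : 0 < q < 1 -> (1+q) * (asin q - asin (q^(S m))) <= F q 0.
Proof.
  intros Hq. rewrite (F_split q 0 m) by auto.
  assert (Hs : Sm (fun k => (1+q) * asin (q^(S k)) - (1+q) * asin (q^(S (S k)))) 0 m <= Sm (a q) 0 m).
  { apply Sm_le. intros; apply a_lo; auto. }
  rewrite (Sm_tele (fun k => (1+q) * asin (q^(S k)))) in Hs. simpl plus in Hs.
  simpl pow in Hs at 1. rewrite Rmult_1_r in Hs.
  rewrite Nat.add_0_l in *. pose proof (F_bound q m Hq). lra.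
Qed.

Lemma asin_near1 th q : 0 < th <= 1 -> cos th <= q < 1 -> PI/2 - th <= asin q.
Proof.
  intros Hth Hq. pose proof PI2_3_2.
  assert (Hc : asin (cos th) = PI/2 - th).
  { rewrite <- sin_shift. apply asin_sin. lra. }
  assert (0 < cos th) by (apply cos_gt_0; lra).
  destruct (Req_dec q (cos th)). subst; lra.
  pose proof (asin_mvt (cos th) q ltac:(lra) ltac:(lra)) as [H2 _].
  assert (0 < sqrt (1 - cos th ^2)) by (apply sqrt_lt_R0; nra).
  assert (0 < (q - cos th) / sqrt (1 - cos th ^2)) by (apply Rdiv_lt_0_compat; lra).
  lra.
Qed.

Definition embI (y : Ipt) : R := proj1_sig y + PI/2.

Lemma embI_iso : isometric_embedding dI dR embI.
Proof.
  intros x y. unfold dR, embI, dI. f_equal. ring.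
Qed.

Lemma cover q g t : 0 < q < 1 -> (forall n, a q n <= g) -> 0 < t -> t < F q 0 ->
  exists n, Rabs (F q n - t) <= g.
Proof.
  intros Hq Hg Ht HL.
  assert (HP : forall N, t <= F q N \/ exists n, Rabs (F q n - t) <= g).
  { induction N. left; lra.
    destruct IHN as [H|H]; [|right; auto].
    destruct (Rle_dec t (F q (S N))). left; auto.
    right. exists N. pose proof (F_S q N Hq). pose proof (Hg N).
    apply Rnot_le_lt in n. rewrite Rabs_pos_eq; lra. }
  assert (Hy : 0 < t * (1 - q)) by (apply Rmult_lt_0_compat; lra).
  destruct (pow_lt_1_zero q ltac:(rewrite Rabs_pos_eq; lra) _ Hy) as [N HN].
  pose proof (HN N (le_n N)) as HNN. rewrite Rabs_pos_eq in HNN by (left; apply pow_lt; lra).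
  pose proof (F_bound q N Hq).
  assert (q^N / (1-q) < t) by (apply Rlt_div_l; lra).
  destruct (HP N) as [H1|H1]; auto. lra.
Qed.

Lemma part2 eps : 0 < eps -> exists delta, 0 < delta /\
  forall q, 0 < q < 1 -> 1 - delta < q -> GH_lt (dq q) dI eps.
Proof.
  intros Heps. pose proof PI2_3_2. pose proof PI_4.
  set (eta := Rmin (eps/16) (1/4)).
  set (th := Rmin (eps/16) 1).
  assert (Heta : 0 < eta <= eps/16 /\ eta <= 1/4).
  { unfold eta. split; [split|]. apply Rmin_pos; lra. apply Rmin_l. apply Rmin_r. }
  assert (Hth : 0 < th <= eps/16 /\ th <= 1).
  { unfold th. split; [split|]. apply Rmin_pos; lra. apply Rmin_l. apply Rmin_r. }
  assert (Hcos : cos th < 1).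
  { rewrite <- cos_0. apply cos_decreasing_1; lra. }
  set (delta := Rmin (Rmin (eps/16) (eps*eps/32)) (1 - cos th)).
  assert (Hd : 0 < delta /\ delta <= eps/16 /\ delta <= eps*eps/32 /\ delta <= 1 - cos th).
  { unfold delta. pose proof (Rmin_l (Rmin (eps/16) (eps*eps/32)) (1 - cos th)).
    pose proof (Rmin_r (Rmin (eps/16) (eps*eps/32)) (1 - cos th)).
    pose proof (Rmin_l (eps/16) (eps*eps/32)). pose proof (Rmin_r (eps/16) (eps*eps/32)).
    split. apply Rmin_pos. apply Rmin_pos. lra. nra. lra. lra. }
  exists delta. split. lra. intros q Hq Hqd.
  set (g := sqrt (1 - q^2)).
  assert (Hg : 0 <= g <= eps/4).
  { split. apply sqrt_pos. unfold g. rewrite <- (sqrt_pow2 (eps/4)) by lra. apply sqrt_le_1_alt.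
    assert (1 - q^2 <= 2 * (1 - q)) by (simpl; nra).
    replace ((eps/4)^2) with (eps*eps/16) by (simpl; field). lra. }
  assert (Hag : forall n, a q n <= g).
  { intros n. pose proof (a_le q n Hq). pose proof (pow_in q n Hq). fold g in H1.
    assert (g * q^n <= g) by nra. lra. }
  set (L := F q 0).
  assert (HLu : L <= PI + 5 * eps / 16).
  { pose proof (L_upper q eta Hq ltac:(lra)). fold g L in H1.
    pose proof (asin_bound q). assert ((1+q) * asin q <= (1+q) * (PI/2)) by (apply Rmult_le_compat_l; lra).
    assert ((1+q) * (PI/2) <= PI) by nra.
    lra. }
  assert (HLl : PI - eps / 2 <= L).
  { assert (Hy : 0 < eta) by lra.
    destruct (pow_lt_1_zero q ltac:(rewrite Rabs_pos_eq; lra) _ Hy) as [N HN].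
    pose proof (HN (S N) ltac:(lia)) as HNN. rewrite Rabs_pos_eq in HNN by (left; apply pow_lt; lra).
    pose proof (L_lower q N Hq). fold L in H1.
    pose proof (asin_small (q^(S N)) ltac:(split; [left; apply pow_lt|]; lra)).
    pose proof (asin_near1 th q ltac:(lra) ltac:(lra)).
    assert (Hx : (2 - delta) * (PI/2 - th - 2*eta) <= (1+q) * (asin q - asin (q^(S N)))).
    { assert (0 < cos th) by (apply cos_gt_0; lra). apply Rmult_le_compat; lra. }
    assert (delta * (PI/2 - th - 2*eta) <= delta * 2) by (apply Rmult_le_compat_l; lra).
    lra. }
  apply (GH_R _ _ (emb q) embI eps (3*eps/4)); try apply emb_iso; try apply embI_iso; auto; try lra.
  - assert (Hm : - (PI/2) <= - (PI/2) <= PI/2) by lra.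
    intros [n|].
    + assert (HFn : 0 <= F q n <= L).
      { split. apply F_bound; auto. apply F_decr; auto; lia. }
      destruct (Rle_dec (F q n) PI).
      * assert (Hy : - (PI/2) <= F q n - PI/2 <= PI/2) by lra.
        exists (exist (fun x => -(PI/2) <= x <= PI/2) _ Hy). unfold dR, emb, embI; simpl. replace (F q n - (F q n - PI/2 + PI/2)) with 0 by ring.
        rewrite Rabs_R0; lra.
      * assert (Hy : - (PI/2) <= PI/2 <= PI/2) by lra.
        exists (exist (fun x => -(PI/2) <= x <= PI/2) _ Hy). unfold dR, emb, embI; simpl. rewrite Rabs_pos_eq; lra.
    + exists (exist (fun x => -(PI/2) <= x <= PI/2) _ Hm). unfold dR, emb, embI; simpl. replace (0 - (- (PI/2) + PI/2)) with 0 by ring.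
      rewrite Rabs_R0; lra.
  - intros [y Hy]. unfold dR, emb, embI; simpl.
    destruct (Rle_dec L (y + PI/2)).
    + exists (Some 0%nat). fold L. rewrite Rabs_left1; lra.
    + destruct (Req_dec (y + PI/2) 0) as [Ht0|Ht0].
      * exists None. rewrite Ht0. replace (0-0) with 0 by ring. rewrite Rabs_R0; lra.
      * destruct (cover q g (y + PI/2) Hq Hag ltac:(lra) ltac:(fold L; lra)) as [k Hn].
        exists (Some k). lra.
Qed.

Theorem theoremB :
  (* continuity of q |-> (X_q, d_q) on (0,1) w.r.t. GH distance *)
  (forall q0 : R, 0 < q0 < 1 ->
     forall eps : R, 0 < eps ->
       exists delta : R, 0 < delta /\
         forall q : R, 0 < q < 1 -> Rabs (q - q0) < delta ->
           GH_lt (dq q) (dq q0) eps) /\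
  (* GH convergence to [-pi/2, pi/2] as q -> 1^- *)
  (forall eps : R, 0 < eps ->
     exists delta : R, 0 < delta /\
       forall q : R, 0 < q < 1 -> 1 - delta < q ->
         GH_lt (dq q) dI eps).
Proof.
  split. exact part1. exact part2.
Qed.
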